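(* Let $S=(\mathcal{E},\Sigma,X,\mathcal{O})$ be an entity. Then $S$ is state atomic (i.e. for $p,q\in\Sigma$, if $O(e,p)\subseteq O(e,q)$ for all $e\in\mathcal{E}$ then $p=q$) if and only if the state eigen closure operator $cl_{eig}$ on $\Sigma$ satisfies the $T_1$ separation axiom.
   Context: An entity $S=(\mathcal{E},\Sigma,X,\mathcal{O})$ consists of a set $\mathcal{E}$, a set $\Sigma$, and for each $e\in\mathcal{E}$, $p\in\Sigma$ a nonempty set $O(e,p)$, with $X=\bigcup_{e,p}O(e,p)$. Let $O(e)=\bigcup_{p}O(e,p)$. For $e\in\mathcal{E}$, $eig_e:\mathcal{P}(O(e))\to\mathcal{P}(\Sigma)$ is $p\in eig_e(A)\iff O(e,p)\subseteq A$, and $\mathcal{F}(e)=\{eig_e(A):A\subseteq O(e)\}$. The state eigen closure system $\mathcal{F}_{eig}$ is the set of all intersections of families of elements of $\bigcup_e\mathcal{F}(e)$, and $cl_{eig}(K)=\bigcap\{F\in\mathcal{F}_{eig}:K\subseteq F\}$ for $K\subseteq\Sigma$. A closure operator $cl$ on $W$ satisfies $T_1$ iff $cl(\{w\})=\{w\}$ for all $w\in W$. *)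

(* Defs.v *)
Set Implicit Arguments.

Definition set (T : Type) := T -> Prop.
Definition subset {T} (A B : set T) := forall x, A x -> B x.
Definition set_eq {T} (A B : set T) := forall x, A x <-> B x.

(* An entity (E, Sigma, X, O): O e p is the nonempty outcome set O(e,p) ⊆ X,
   and X is the union of all O(e,p). *)
Record entity := {
  Ent : Type;
  St : Type;
  Out : Type;
  O : Ent -> St -> set Out;
  O_nonempty : forall e p, exists x, O e p x;
  X_union : forall x : Out, exists e p, O e p x
}.

Definition Oe (S : entity) (e : Ent S) : set (Out S) :=
  fun x => exists p, O S e p x.

Definition eig (S : entity) (e : Ent S) (A : set (Out S)) : set (St S) :=
  fun p => subset (O S e p) A.

Definition Fe (S : entity) (e : Ent S) (F : set (St S)) : Prop :=
  exists A : set (Out S), subset A (Oe S e) /\ set_eq F (eig S e A).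

Definition F_eig (S : entity) (F : set (St S)) : Prop :=
  exists Fam : set (set (St S)),
    (forall G, Fam G -> exists e, Fe S e G) /\
    set_eq F (fun p => forall G, Fam G -> G p).

Definition cl_eig (S : entity) (K : set (St S)) : set (St S) :=
  fun p => forall F, F_eig S F -> subset K F -> F p.

Definition T1 {W : Type} (cl : set W -> set W) : Prop :=
  forall w : W, set_eq (cl (fun x => x = w)) (fun x => x = w).

Definition state_atomic (S : entity) : Prop :=
  forall p q : St S, (forall e, subset (O S e p) (O S e q)) -> p = q.

(* Main.v *)
Require Import Defs.

Theorem mainTheorem5 (S : entity) :
  state_atomic S <-> T1 (cl_eig S).
Proof.
  split.
  - intros Hat w x; split.
    + intros Hx. apply Hat. intros e.
      set (F := eig S e (O S e w)).
      assert (HF : F_eig S F).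
      { exists (fun G => G = F). split.
        - intros G ->. exists e. exists (O S e w). split.
          + intros y Hy. exists w. exact Hy.
          + intros z. tauto.
        - intros z. split.
          + intros Hz G ->. exact Hz.
          + intros H. apply H. reflexivity. }
      assert (Hs : subset (fun x => x = w) F).
      { intros y ->. unfold F, eig, subset. auto. }
      exact (Hx F HF Hs).
    + intros -> F _ Hs. apply Hs. reflexivity.
  - intros HT p q Hpq.
    apply (proj1 (HT q p)).
    intros F [Fam [HFam HFeq]] Hs.
    apply (proj2 (HFeq p)).
    intros G HG.
    destruct (HFam G HG) as [e [A [_ HGA]]].
    apply (proj2 (HGA p)).
    assert (Hq : G q) by (apply (proj1 (HFeq q)); [apply Hs; reflexivity | exact HG]).
    apply (proj1 (HGA q)) in Hq.
    intros y Hy. apply Hq. apply Hpq. exact Hy.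
Qed.
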